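(* In the El Gamal–Costa deterministic interference channel with feedback, under any feedback encoding functions and for every $i\ge1$, letting $U_i=(V_1^{i-1},V_2^{i-1})$, the messages $W_1$ and $W_2$ are conditionally independent given $U_i$, and consequently $X_{1i}$ and $X_{2i}$ are conditionally independent given $U_i$.
   Context: El Gamal–Costa deterministic interference channel: finite alphabets $\mathcal{X}_k,\mathcal{V}_k,\mathcal{Y}_k$ ($k=1,2$); deterministic functions $g_k:\mathcal{X}_k\to\mathcal{V}_k$ and $f_1:\mathcal{X}_1\times\mathcal{V}_2\to\mathcal{Y}_1$, $f_2:\mathcal{X}_2\times\mathcal{V}_1\to\mathcal{Y}_2$, with at each time $V_{ki}=g_k(X_{ki})$, $Y_{1i}=f_1(X_{1i},V_{2i})$, $Y_{2i}=f_2(X_{2i},V_{1i})$. The El Gamal–Costa condition holds: $V_2$ is a deterministic function of $(Y_1,X_1)$ and $V_1$ of $(Y_2,X_2)$. Independent messages $W_1,W_2$ (uniform on finite sets); with feedback, $X_{ki}=f_k^i(W_k,Y_k^{i-1})$ for deterministic functions $f_k^i$. $A^{j}=(A_1,\dots,A_j)$; $U_1$ is constant. *)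

(* Defs.v *)
From HB Require Import structures.
From mathcomp Require Import all_boot all_order all_algebra.
Set Implicit Arguments. Unset Strict Implicit. Unset Printing Implicit Defensive.
Import Order.TTheory GRing.Theory Num.Theory.

Definition Pr (Om : finType) (E : pred Om) : rat :=
  (#|[pred w | E w]|%:R / #|Om|%:R)%R.

Definition cond_indep (Om : finType) (A B C : eqType)
  (X : Om -> A) (Y : Om -> B) (Z : Om -> C) : Prop :=
  forall (a : A) (b : B) (c : C),
    (Pr (fun w => [&& X w == a, Y w == b & Z w == c])
       * Pr (fun w => Z w == c)
     = Pr (fun w => (X w == a) && (Z w == c))
       * Pr (fun w => (Y w == b) && (Z w == c)))%R.

Section Channel.
Variables (X1 X2 V1 V2 Y1 Y2 M1 M2 : finType).
Variables (g1 : X1 -> V1) (g2 : X2 -> V2).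
Variables (f1 : X1 -> V2 -> Y1) (f2 : X2 -> V1 -> Y2).
(* feedback encoders: enc_k i w y^(i-1) = X_{ki} = f_k^i(W_k, Y_k^{i-1}) *)
Variables (enc1 : nat -> M1 -> seq Y1 -> X1) (enc2 : nat -> M2 -> seq Y2 -> X2).

Definition EGC_condition : Prop :=
  (exists h1 : Y1 -> X1 -> V2, forall x1 v2, h1 (f1 x1 v2) x1 = v2) /\
  (exists h2 : Y2 -> X2 -> V1, forall x2 v1, h2 (f2 x2 v1) x2 = v1).

Record symb := Symb { sx1 : X1; sx2 : X2; sv1 : V1; sv2 : V2; sy1 : Y1; sy2 : Y2 }.

(* hist n (w1,w2) = the list of the symbols at times 1..n *)
Fixpoint hist (n : nat) (w : M1 * M2) : seq symb :=
  match n with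
  | 0 => [::]
  | n'.+1 =>
      let h := hist n' w in
      let x1 := enc1 n w.1 (map sy1 h) in
      let x2 := enc2 n w.2 (map sy2 h) in
      let v1 := g1 x1 in
      let v2 := g2 x2 in
      rcons h (Symb x1 x2 v1 v2 (f1 x1 v2) (f2 x2 v1))
  end.

(* X_{1i}, X_{2i} for i >= 1 *)
Definition X1at (i : nat) (w : M1 * M2) : X1 :=
  enc1 i w.1 (map sy1 (hist i.-1 w)).
Definition X2at (i : nat) (w : M1 * M2) : X2 :=
  enc2 i w.2 (map sy2 (hist i.-1 w)).

Definition Uat (i : nat) (w : M1 * M2) : seq V1 * seq V2 :=
  (map sv1 (hist i.-1 w), map sv2 (hist i.-1 w)).
End Channel.

(* Main.v *)
Require Import Defs.
From HB Require Import structures.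
From mathcomp Require Import all_boot all_order all_algebra.
Set Implicit Arguments. Unset Strict Implicit. Unset Printing Implicit Defensive.
Import Order.TTheory GRing.Theory Num.Theory.

Lemma card_rect (M1 M2 : finType) (A : pred M1) (B : pred M2) :
  #|[pred w : M1 * M2 | A w.1 && B w.2]| = (#|A| * #|B|)%N.
Proof.
rewrite -cardX; apply: eq_card => [[x y]]; by rewrite !inE.
Qed.

Lemma rect_indep (M1 M2 : finType) (A B C : eqType)
  (X : M1 * M2 -> A) (Y : M1 * M2 -> B) (Z : M1 * M2 -> C)
  (Hrect : forall w1 w2 w1' w2', Z (w1, w2') = Z (w1', w2) -> Z (w1, w2) = Z (w1, w2'))
  (HX : forall w1 w2 w2', Z (w1, w2) = Z (w1, w2') -> X (w1, w2) = X (w1, w2'))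
  (HY : forall w1 w2 w1', Z (w1, w2) = Z (w1', w2) -> Y (w1, w2) = Y (w1', w2)) :
  cond_indep X Y Z.
Proof.
move=> a b c.
pose Ea := [pred w1 | [exists w2, (X (w1, w2) == a) && (Z (w1, w2) == c)]].
pose Eb := [pred w2 | [exists w1, (Y (w1, w2) == b) && (Z (w1, w2) == c)]].
pose C1 := [pred w1 | [exists w2, Z (w1, w2) == c]].
pose C2 := [pred w2 | [exists w1, Z (w1, w2) == c]].
have key : forall w1 w2 w1' w2', Z (w1, w2') = c -> Z (w1', w2) = c ->
   [/\ Z (w1, w2) = c, Z (w1, w2) = Z (w1, w2') & Z (w1, w2) = Z (w1', w2)].
  move=> w1 w2 w1' w2' h1 h2.
  have e : Z (w1, w2) = c by rewrite (Hrect w1 w2 w1' w2') // h1 h2.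
  by split; rewrite ?e ?h1 ?h2.
have E1 : #|[pred w | [&& X w == a, Y w == b & Z w == c]]| = (#|Ea| * #|Eb|)%N.
  rewrite -card_rect; apply: eq_card => [[w1 w2]]; rewrite !inE /=.
  apply/idP/idP.
    case/and3P=> /eqP ha /eqP hb /eqP hc; apply/andP; split; apply/existsP.
      by exists w2; rewrite ha hc !eqxx.
    by exists w1; rewrite hb hc !eqxx.
  case/andP=> /existsP[w2' /andP[/eqP ha /eqP hc]] /existsP[w1' /andP[/eqP hb /eqP hc']].
  have [e e1 e2] := key _ _ _ _ hc hc'.
  by rewrite (HX _ _ _ e1) (HY _ _ _ e2) e ha hb !eqxx.
have E2 : #|[pred w | (X w == a) && (Z w == c)]| = (#|Ea| * #|C2|)%N.
  rewrite -card_rect; apply: eq_card => [[w1 w2]]; rewrite !inE /=.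
  apply/idP/idP.
    case/andP=> /eqP ha /eqP hc; apply/andP; split; apply/existsP.
      by exists w2; rewrite ha hc !eqxx.
    by exists w1; rewrite hc !eqxx.
  case/andP=> /existsP[w2' /andP[/eqP ha /eqP hc]] /existsP[w1' /eqP hc'].
  have [e e1 e2] := key _ _ _ _ hc hc'.
  by rewrite (HX _ _ _ e1) e ha !eqxx.
have E3 : #|[pred w | (Y w == b) && (Z w == c)]| = (#|C1| * #|Eb|)%N.
  rewrite -card_rect; apply: eq_card => [[w1 w2]]; rewrite !inE /=.
  apply/idP/idP.
    case/andP=> /eqP hb /eqP hc; apply/andP; split; apply/existsP.
      by exists w2; rewrite hc !eqxx.
    by exists w1; rewrite hb hc !eqxx.
  case/andP=> /existsP[w2' /eqP hc] /existsP[w1' /andP[/eqP hb /eqP hc']].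
  have [e e1 e2] := key _ _ _ _ hc hc'.
  by rewrite (HY _ _ _ e2) e hb !eqxx.
have E4 : #|[pred w | Z w == c]| = (#|C1| * #|C2|)%N.
  rewrite -card_rect; apply: eq_card => [[w1 w2]]; rewrite !inE /=.
  apply/idP/idP.
    move=> /eqP hc; apply/andP; split; apply/existsP.
      by exists w2; rewrite hc !eqxx.
    by exists w1; rewrite hc !eqxx.
  case/andP=> /existsP[w2' /eqP hc] /existsP[w1' /eqP hc'].
  have [e e1 e2] := key _ _ _ _ hc hc'.
  by rewrite e eqxx.
rewrite /Pr E1 E2 E3 E4.
rewrite mulrACA [in RHS]mulrACA -!natrM.
congr (_ * _)%R; congr (_%:R)%R.
by rewrite mulnACA [RHS]mulnACA (mulnC #|C2|).
Qed.


Section Ch.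
Variables (X1 X2 V1 V2 Y1 Y2 M1 M2 : finType).
Variables (g1 : X1 -> V1) (g2 : X2 -> V2).
Variables (f1 : X1 -> V2 -> Y1) (f2 : X2 -> V1 -> Y2).
Variables (enc1 : nat -> M1 -> seq Y1 -> X1) (enc2 : nat -> M2 -> seq Y2 -> X2).

Local Notation H := (hist g1 g2 f1 f2 enc1 enc2).

Lemma hist_rect n w1 w2 w1' w2' :
  map (@sv1 _ _ _ _ _ _) (H n (w1, w2')) = map (@sv1 _ _ _ _ _ _) (H n (w1', w2)) ->
  map (@sv2 _ _ _ _ _ _) (H n (w1, w2')) = map (@sv2 _ _ _ _ _ _) (H n (w1', w2)) ->
  [/\ map (@sy1 _ _ _ _ _ _) (H n (w1, w2)) = map (@sy1 _ _ _ _ _ _) (H n (w1, w2')),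
      map (@sy2 _ _ _ _ _ _) (H n (w1, w2)) = map (@sy2 _ _ _ _ _ _) (H n (w1', w2)),
      map (@sv1 _ _ _ _ _ _) (H n (w1, w2)) = map (@sv1 _ _ _ _ _ _) (H n (w1, w2')) &
      map (@sv2 _ _ _ _ _ _) (H n (w1, w2)) = map (@sv2 _ _ _ _ _ _) (H n (w1', w2))].
Proof.
elim: n => [|n IH] //=.
rewrite !map_rcons /= => /rcons_inj[hv1 ev1] /rcons_inj[hv2 ev2].
have [ey1 ey2 ev1' ev2'] := IH hv1 hv2.
rewrite ey1 ey2 ev1' ev2' ev2.
by rewrite ev1; split.
Qed.
End Ch.

Theorem claim3 (X1 X2 V1 V2 Y1 Y2 M1 M2 : finType)
  (g1 : X1 -> V1) (g2 : X2 -> V2)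
  (f1 : X1 -> V2 -> Y1) (f2 : X2 -> V1 -> Y2)
  (hEGC : EGC_condition f1 f2)
  (enc1 : nat -> M1 -> seq Y1 -> X1) (enc2 : nat -> M2 -> seq Y2 -> X2)
  (i : nat) (hi : (1 <= i)%N) :
  cond_indep (fun w : M1 * M2 => w.1) (fun w : M1 * M2 => w.2)
             (Uat g1 g2 f1 f2 enc1 enc2 i)
  /\ cond_indep (X1at g1 g2 f1 f2 enc1 enc2 i) (X2at g1 g2 f1 f2 enc1 enc2 i)
                (Uat g1 g2 f1 f2 enc1 enc2 i).
Proof.
have Hrect : forall w1 w2 w1' w2',
    Uat g1 g2 f1 f2 enc1 enc2 i (w1, w2') = Uat g1 g2 f1 f2 enc1 enc2 i (w1', w2) ->
    Uat g1 g2 f1 f2 enc1 enc2 i (w1, w2) = Uat g1 g2 f1 f2 enc1 enc2 i (w1, w2').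
  move=> w1 w2 w1' w2' []; rewrite /Uat => h1 h2.
  have [_ _ -> ->] := hist_rect h1 h2.
  by rewrite h2.
have HX : forall w1 w2 w2',
    Uat g1 g2 f1 f2 enc1 enc2 i (w1, w2) = Uat g1 g2 f1 f2 enc1 enc2 i (w1, w2') ->
    X1at g1 g2 f1 f2 enc1 enc2 i (w1, w2) = X1at g1 g2 f1 f2 enc1 enc2 i (w1, w2').
  move=> w1 w2 w2' []; rewrite /Uat /X1at => h1 h2.
  have [-> _ _ _] := hist_rect (esym h1) (esym h2).
  by [].
have HY : forall w1 w2 w1',
    Uat g1 g2 f1 f2 enc1 enc2 i (w1, w2) = Uat g1 g2 f1 f2 enc1 enc2 i (w1', w2) ->
    X2at g1 g2 f1 f2 enc1 enc2 i (w1, w2) = X2at g1 g2 f1 f2 enc1 enc2 i (w1', w2).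
  move=> w1 w2 w1' []; rewrite /Uat /X2at => h1 h2.
  have [_ -> _ _] := hist_rect h1 h2.
  by [].
split.
  by apply: rect_indep.
by apply: rect_indep.
Qed.
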